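(* Let $\eta\in Q^+\setminus\{0\}$, $g\in U(\mathfrak n^-_{r-1}[t])_{-\eta}$, and $(\underline\ell,\underline{\mathbf s})\in\mathbf F_+^r$. Then $[\underline{\mathbf x}^+_r(\underline\ell,\underline{\mathbf s}),g]$ is a linear combination of elements $g'\,\underline{\mathbf x}^+_r(\underline\ell',\underline{\mathbf s}')$ with $g'\in U(\mathfrak n^-_{r-1}[t])$, $(\underline\ell',\underline{\mathbf s}')\in\mathbf F_+^r$ and $|\underline{\mathbf s}'|\blacktriangleright|\underline{\mathbf s}|$.
   Context: $\mathfrak g=\mathfrak{sl}_{r+1}(\mathbb C)$, $r\ge2$, $\mathfrak h$ diagonal, simple roots $\alpha_i$, $Q^+=\sum\mathbb N\alpha_i$; $x^+_{i,j}=E_{i,j+1}$, $x^-_{i,j}=E_{j+1,i}$; $\mathfrak n^-_{r-1}=\bigoplus_{1\le i\le j\le r-1}\mathbb Cx^-_{i,j}$; $\mathfrak a[t]=\mathfrak a\otimes\mathbb C[t]$. $U(\mathfrak n^-_{r-1}[t])_{-\eta}$ is the $-\eta$ weight space for the adjoint action of $\mathfrak h$. $\mathbf F_+$: pairs $(\ell,\mathbf s)$ with $\ell\in\mathbb N$, $\mathbf s=(\mathbf s(1)\le\dots\le\mathbf s(\ell))$, all $\mathbf s(p)\in\mathbb N_+$ (including $(0,\emptyset)$), $|\mathbf s|=\sum\mathbf s(p)$. $\mathbf x^+_{i,r}(\ell,\mathbf s)=\prod_p(x^+_{i,r}\otimes t^{\mathbf s(p)})$, $\underline{\mathbf x}^+_r(\underline\ell,\underline{\mathbf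 s})=\mathbf x^+_{1,r}(\ell_1,\mathbf s_1)\cdots\mathbf x^+_{r,r}(\ell_r,\mathbf s_r)$, $|\underline{\mathbf s}|=(|\mathbf s_1|,\dots,|\mathbf s_r|)$. For $\underline d,\underline d'\in\mathbb N^r$, $\underline d\blacktriangleright\underline d'$ means that for some $s$, $d_i=d'_i$ for all $i>s$ and $d_s>d'_s$. *)

(* Defs.v *)
From HB Require Import structures.
From mathcomp Require Import all_boot all_order all_algebra.
Set Implicit Arguments. Unset Strict Implicit. Unset Printing Implicit Defensive.
Import Order.TTheory GRing.Theory Num.Theory.
Local Open Scope ring_scope.

(* Prop-valued list membership (no eqType needed) *)
Fixpoint lIn (T : Type) (x : T) (l : seq T) : Prop :=
  if l is y :: l' then y = x \/ lIn x l' else False.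

(* g = sl_{r+1}: (r+1)x(r+1) matrices of trace 0; indices are 1-based in
   the paper, 0-based ('I_(r.+1)) here. *)

(* x^+_{i,j} = E_{i,j+1} ,  x^-_{i,j} = E_{j+1,i}  (paper's 1-based indices) *)
Definition xplus (K : fieldType) (r i j : nat) : 'M[K]_(r.+1) :=
  delta_mx (inord i.-1) (inord j).
Definition xminus (K : fieldType) (r i j : nat) : 'M[K]_(r.+1) :=
  delta_mx (inord j) (inord i.-1).

(* phi a X  represents the image of  X (x) t^a  under a Lie algebra
   homomorphism  sl_{r+1}[t] -> A  (A with commutator bracket). *)
Definition is_loop_sl_hom (K : fieldType) (A : algType K) (r : nat)
  (phi : nat -> 'M[K]_(r.+1) -> A) : Prop :=
  (forall a (c : K) (X Y : 'M[K]_(r.+1)), phi a (c *: X + Y) = c *: phi a X + phi a Y)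
  /\ (forall a b (X Y : 'M[K]_(r.+1)), \tr X = 0 -> \tr Y = 0 ->
        phi a X * phi b Y - phi b Y * phi a X = phi (a + b)%N (X *m Y - Y *m X)).

(* basis monomials of n^-_{r-1}[t]: triples (i,j,a) standing for x^-_{i,j} (x) t^a *)
Definition nminus_letter (r : nat) (m : nat * nat * nat) : bool :=
  [&& 1 <= m.1.1, m.1.1 <= m.1.2 & m.1.2 <= r.-1]%N.

Definition nminus_word (K : fieldType) (A : algType K) (r : nat)
  (phi : nat -> 'M[K]_(r.+1) -> A) (w : seq (nat * nat * nat)) : A :=
  \prod_(m <- w) phi m.2 (xminus K r m.1.1 m.1.2).

(* y lies in the image of U(n^-_{r-1}[t]) (the subalgebra generated by the
   images of the x^-_{i,j} (x) t^a, 1 <= i <= j <= r-1) *)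
Definition in_U_nminus (K : fieldType) (A : algType K) (r : nat)
  (phi : nat -> 'M[K]_(r.+1) -> A) (y : A) : Prop :=
  exists l : seq (K * seq (nat * nat * nat)),
    (forall p, lIn p l -> all (nminus_letter r) p.2) /\
    y = \sum_(p <- l) p.1 *: nminus_word phi p.2.

(* eta = sum_k eta_k alpha_{k+1} in Q^+ (0-based k < r), evaluated at h in the
   Cartan subalgebra: alpha_{k+1}(h) = h_{kk} - h_{k+1,k+1}. *)
Definition root_eval (K : fieldType) (r : nat) (eta : 'I_r -> nat)
  (h : 'M[K]_(r.+1)) : K :=
  \sum_(k < r) (eta k)%:R * (h (inord k) (inord k) - h (inord k.+1) (inord k.+1)).

(* y has weight -eta for the adjoint action of h (identified with h (x) t^0) *)
Definition has_weight_neg (K : fieldType) (A : algType K) (r : nat)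
  (phi : nat -> 'M[K]_(r.+1) -> A) (eta : 'I_r -> nat) (y : A) : Prop :=
  forall h : 'M[K]_(r.+1), is_diag_mx h -> \tr h = 0 ->
    phi 0%N h * y - y * phi 0%N h = - (root_eval eta h) *: y.

(* An element of F_+^r: for each i in 1..r (0-based k < r) a nondecreasing
   sequence s_i of positive integers; ell_i = size s_i. *)
Definition in_Fplus (s : seq nat) : bool := sorted leq s && all (fun x => 0 < x)%N s.
Definition in_Fplus_r (r : nat) (S : 'I_r -> seq nat) : Prop :=
  forall k, in_Fplus (S k).

Definition xplus_mono (K : fieldType) (A : algType K) (r : nat)
  (phi : nat -> 'M[K]_(r.+1) -> A) (i : nat) (s : seq nat) : A :=
  \prod_(a <- s) phi a (xplus K r i r).

Definition xplus_r (K : fieldType) (A : algType K) (r : nat)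
  (phi : nat -> 'M[K]_(r.+1) -> A) (S : 'I_r -> seq nat) : A :=
  \prod_(k < r) xplus_mono phi k.+1 (S k).

Definition abs_s (r : nat) (S : 'I_r -> seq nat) : 'I_r -> nat :=
  fun k => sumn (S k).

Definition btri (r : nat) (d d' : 'I_r -> nat) : Prop :=
  exists s : 'I_r, (forall i : 'I_r, (s < i)%N -> d i = d' i) /\ (d' s < d s)%N.

(* Main.v *)
Require Import Defs.
From HB Require Import structures.
From mathcomp Require Import all_boot all_order all_algebra.
From Stdlib Require Import FunctionalExtensionality.
From mathcomp Require Import zify.
Import Order.TTheory GRing.Theory Num.Theory.
Local Open Scope ring_scope.
Set Implicit Arguments. Unset Strict Implicit. Unset Printing Implicit Defensive.

Lemma lIn_cat T (x : T) l1 l2 : lIn x (l1 ++ l2) -> lIn x l1 \/ lIn x l2.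
Proof. elim: l1 => [|y l IH] /=; first by right. by case=> [->|/IH [H|H]]; auto. Qed.

Lemma lIn_map T U (f : T -> U) y l : lIn y (map f l) -> exists x, lIn x l /\ y = f x.
Proof.
elim: l => [|z l IH] //= [<-|/IH [x [H1 H2]]]; first by exists z; split; [left|].
by exists x; split; [right|].
Qed.

Lemma prod_perm_comm (R : pzSemiRingType) (T : eqType) (f : T -> R) (s t : seq T) :
  (forall x y, GRing.comm (f x) (f y)) -> perm_eq s t ->
  \prod_(x <- s) f x = \prod_(x <- t) f x.
Proof.
move=> Hc; elim: s t => [|x s IH] t Hp.
  by move: (perm_size Hp) => /= /esym/size0nil ->.
have : x \in t by rewrite -(perm_mem Hp) mem_head.
move=> Ht; case: (splitPr Ht) Hp => t1 t2 Hp.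
have Hp' : perm_eq s (t1 ++ t2).
  by rewrite -(perm_cons x); apply: (perm_trans Hp); rewrite -cat1s perm_catCA.
rewrite big_cons big_cat big_cons (IH _ Hp') big_cat /= !mulrA.
congr (_ * _); apply: commr_prod => i _; exact: Hc.
Qed.

Lemma phi0 (K : fieldType) (A : algType K) r (phi : nat -> 'M[K]_(r.+1) -> A) a :
  is_loop_sl_hom phi -> phi a 0 = 0.
Proof.
case=> Hl _; have := Hl a 1 0 0; rewrite !scale1r !addr0 => H.
by have := congr1 (fun z => z - phi a 0) H; rewrite addrK subrr.
Qed.

Lemma phiN (K : fieldType) (A : algType K) r (phi : nat -> 'M[K]_(r.+1) -> A) a X :
  is_loop_sl_hom phi -> phi a (- X) = - phi a X.
Proof.
move=> H; have := H.1 a (-1) X 0; rewrite addr0 (phi0 _ H) addr0 !scaleN1r //.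
Qed.

Lemma trace_delta (K : fieldType) n (i j : 'I_n) : i != j -> \tr (delta_mx i j : 'M[K]_n) = 0.
Proof.
move=> Hij; rewrite /mxtrace big1 // => k _; rewrite mxE.
by case: (k =P i) => [->|]; rewrite ?(negbTE Hij) //= andbF.
Qed.

Lemma inord_neq r (i j : nat) : (i <= r)%N -> (j <= r)%N -> i != j ->
  (inord i : 'I_r.+1) != inord j.
Proof.
move=> Hi Hj Hij; apply/eqP => /(congr1 (@nat_of_ord _)); rewrite !inordK ?ltnS //.
by move/eqP; rewrite (negbTE Hij).
Qed.

Lemma xplus_tr (K : fieldType) r (k : nat) : (k < r)%N -> \tr (xplus K r k.+1 r) = 0.
Proof. move=> Hk; apply: trace_delta; apply: inord_neq => /=; lia. Qed.

Lemma xminus_tr (K : fieldType) r i j :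
  [&& 1 <= i, i <= j & j <= r.-1]%N -> \tr (xminus K r i j) = 0.
Proof.
case/and3P=> H1 H2 H3; apply: trace_delta; apply: inord_neq; lia.
Qed.

Lemma xplus_xplus_mx (K : fieldType) r k k' : (k < r)%N -> (k' < r)%N ->
  xplus K r k.+1 r *m xplus K r k'.+1 r - xplus K r k'.+1 r *m xplus K r k.+1 r = 0.
Proof.
move=> Hk Hk'; rewrite /xplus !mul_delta_mx_cond /=.
rewrite !(negbTE (inord_neq _ _ _)) ?subrr //; lia.
Qed.

Lemma xplus_xminus_mx (K : fieldType) r (k0 : nat) i j : (k0 < r)%N ->
  [&& 1 <= i, i <= j & j <= r.-1]%N ->
  xplus K r k0.+1 r *m xminus K r i j - xminus K r i j *m xplus K r k0.+1 r =
  if i == k0.+1 then - xplus K r j.+1 r else 0.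
Proof.
move=> Hk /and3P [H1 H2 H3].
have Hjr : (j < r)%N by lia.
rewrite /xplus /xminus !mul_delta_mx_cond /=.
rewrite (negbTE (inord_neq _ _ _)) ?mulr0n ?sub0r; [|lia|lia|lia].
have -> : ((inord i.-1 : 'I_r.+1) == inord k0) = (i == k0.+1).
  apply/eqP/eqP => [/(congr1 (@nat_of_ord _))|->]; last by [].
  rewrite !inordK; lia.
by case: (i == k0.+1); rewrite ?mulr1n ?mulr0n ?oppr0.
Qed.

Lemma X_comm (K : fieldType) (A : algType K) r (phi : nat -> 'M[K]_(r.+1) -> A) a b k k' :
  is_loop_sl_hom phi -> (k < r)%N -> (k' < r)%N ->
  GRing.comm (phi a (xplus K r k.+1 r)) (phi b (xplus K r k'.+1 r)).
Proof.
move=> Hphi Hk Hk'; rewrite /GRing.comm.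
have := Hphi.2 a b _ _ (xplus_tr K Hk) (xplus_tr K Hk').
by rewrite xplus_xplus_mx // phi0 // => /eqP; rewrite subr_eq0 => /eqP.
Qed.

Lemma xmono_comm (K : fieldType) (A : algType K) r (phi : nat -> 'M[K]_(r.+1) -> A) k k' s t :
  is_loop_sl_hom phi -> (k < r)%N -> (k' < r)%N ->
  GRing.comm (xplus_mono phi k.+1 s) (xplus_mono phi k'.+1 t).
Proof.
move=> Hphi Hk Hk'; apply: commr_prod => b _; apply: commr_sym.
by apply: commr_prod => a _; apply: X_comm.
Qed.

Lemma xplus_r_cat (K : fieldType) (A : algType K) r (phi : nat -> 'M[K]_(r.+1) -> A) S T :
  is_loop_sl_hom phi ->
  xplus_r phi (fun k => S k ++ T k) = xplus_r phi S * xplus_r phi T.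
Proof.
move=> Hphi; rewrite /xplus_r -prodrM_comm.
  by apply: eq_bigr => k _; rewrite /xplus_mono big_cat.
by move=> i j _ _; apply: xmono_comm.
Qed.

Lemma xplus_r_nil (K : fieldType) (A : algType K) r (phi : nat -> 'M[K]_(r.+1) -> A) :
  xplus_r phi (fun _ => [::]) = 1.
Proof. by rewrite /xplus_r big1 // => k _; rewrite /xplus_mono big_nil. Qed.

Definition esing r (k0 : 'I_r) (a : nat) : 'I_r -> seq nat :=
  fun k => if k == k0 then [:: a] else [::].

Lemma xplus_r_e (K : fieldType) (A : algType K) r (phi : nat -> 'M[K]_(r.+1) -> A) k0 a :
  xplus_r phi (esing k0 a) = phi a (xplus K r k0.+1 r).
Proof.
rewrite /xplus_r (eq_bigr (fun k : 'I_r => if k == k0 then phi a (xplus K r k.+1 r) else 1)).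
  by rewrite -big_mkcond big_pred1_eq.
by move=> k _; rewrite /esing /xplus_mono; case: (k == k0); rewrite ?big_seq1 ?big_nil.
Qed.

Lemma xplus_r_sort (K : fieldType) (A : algType K) r (phi : nat -> 'M[K]_(r.+1) -> A) S :
  is_loop_sl_hom phi ->
  xplus_r phi (fun k => sort leq (S k)) = xplus_r phi S.
Proof.
move=> Hphi; apply: eq_bigr => k _; rewrite /xplus_mono; apply: prod_perm_comm.
  by move=> x y; apply: X_comm.
by rewrite perm_sort.
Qed.

Lemma abs_cat r (S T : 'I_r -> seq nat) :
  abs_s (fun k => S k ++ T k) = fun k => (abs_s S k + abs_s T k)%N.
Proof. by apply: functional_extensionality => k; rewrite /abs_s sumn_cat. Qed.

Lemma abs_e r (k0 : 'I_r) a : abs_s (esing k0 a) = fun k => if k == k0 then a else 0%N.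
Proof. by apply: functional_extensionality => k; rewrite /abs_s /esing; case: (k == k0) => /=; rewrite ?addn0. Qed.

Lemma abs_sort r (S : 'I_r -> seq nat) : abs_s (fun k => sort leq (S k)) = abs_s S.
Proof. by apply: functional_extensionality => k; rewrite /abs_s; apply: perm_sumn; rewrite perm_sort. Qed.

Lemma btri_trans r (a b c : 'I_r -> nat) : btri a b -> btri b c -> btri a c.
Proof.
move=> [s1 [H1 L1]] [s2 [H2 L2]].
case: (ltngtP s1 s2) => Hs.
- exists s2; split; first by move=> i Hi; rewrite H1 ?H2 //; lia.
  by rewrite H1.
- exists s1; split; first by move=> i Hi; rewrite H1 ?H2 //; lia.
  by rewrite -H2.
- have E : s1 = s2 by apply: val_inj.
  subst s2; exists s1; split; first by move=> i Hi; rewrite H1 ?H2.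
  lia.
Qed.

Lemma btri_add2 r (a b c d : 'I_r -> nat) : btri a c -> btri b d ->
  btri (fun k => a k + b k)%N (fun k => c k + d k)%N.
Proof.
move=> [s1 [H1 L1]] [s2 [H2 L2]].
case: (ltngtP s1 s2) => Hs.
- exists s2; split; first by move=> i Hi; rewrite H1 ?H2 //; lia.
  rewrite H1 //; lia.
- exists s1; split; first by move=> i Hi; rewrite H1 ?H2 //; lia.
  rewrite H2 //; lia.
- have E : s1 = s2 by apply: val_inj.
  subst s2; exists s1; split; first by move=> i Hi; rewrite H1 ?H2.
  lia.
Qed.

Lemma btri_addr r (a b c : 'I_r -> nat) : btri a c ->
  btri (fun k => a k + b k)%N (fun k => c k + b k)%N.
Proof.
move=> [s1 [H1 L1]]; exists s1; split; first by move=> i Hi; rewrite H1.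
lia.
Qed.

Lemma btri_addl r (a b c : 'I_r -> nat) : btri a c ->
  btri (fun k => b k + a k)%N (fun k => b k + c k)%N.
Proof.
move=> [s1 [H1 L1]]; exists s1; split; first by move=> i Hi; rewrite H1.
lia.
Qed.

Lemma btri_e r (k0 j : 'I_r) a b : (k0 < j)%N -> (0 < b)%N ->
  btri (abs_s (esing j b)) (abs_s (esing k0 a)).
Proof.
move=> Hk Hb; rewrite !abs_e; exists j; split.
  move=> i Hi; have -> : (i == j) = false by apply/eqP => E; subst i; lia.
  by have -> : (i == k0) = false by apply/eqP => E; subst i; lia.
rewrite eqxx; have -> : (j == k0) = false by apply/eqP => E; subst j; lia.
by [].
Qed.

Lemma inU_0 (K : fieldType) (A : algType K) r (phi : nat -> 'M[K]_(r.+1) -> A) :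
  in_U_nminus phi 0.
Proof. by exists [::]; split => //; rewrite big_nil. Qed.

Lemma inU_add (K : fieldType) (A : algType K) r (phi : nat -> 'M[K]_(r.+1) -> A) u v :
  in_U_nminus phi u -> in_U_nminus phi v -> in_U_nminus phi (u + v).
Proof.
move=> [l1 [H1 ->]] [l2 [H2 ->]]; exists (l1 ++ l2); split; last by rewrite big_cat.
by move=> p Hp; case: (lIn_cat Hp) => Hq; [exact: H1|exact: H2].
Qed.

Lemma inU_scale (K : fieldType) (A : algType K) r (phi : nat -> 'M[K]_(r.+1) -> A) c u :
  in_U_nminus phi u -> in_U_nminus phi (c *: u).
Proof.
move=> [l [H ->]]; exists (map (fun p => (c * p.1, p.2)) l); split.
  by move=> p Hp; case: (lIn_map Hp) => q [Hq ->] /=; exact: H.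
by rewrite big_map scaler_sumr; apply: eq_bigr => p _; rewrite scalerA.
Qed.

Lemma word_cat (K : fieldType) (A : algType K) r (phi : nat -> 'M[K]_(r.+1) -> A) w1 w2 :
  nminus_word phi (w1 ++ w2) = nminus_word phi w1 * nminus_word phi w2.
Proof. by rewrite /nminus_word big_cat. Qed.

Lemma inU_word (K : fieldType) (A : algType K) r (phi : nat -> 'M[K]_(r.+1) -> A) w :
  all (nminus_letter r) w -> in_U_nminus phi (nminus_word phi w).
Proof.
move=> H; exists [:: (1, w)]; split; first by move=> p /= [<-|//].
by rewrite big_seq1 scale1r.
Qed.

Lemma inU_wordmul (K : fieldType) (A : algType K) r (phi : nat -> 'M[K]_(r.+1) -> A) w v :
  all (nminus_letter r) w -> in_U_nminus phi v -> in_U_nminus phi (nminus_word phi w * v).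
Proof.
move=> Hw [l [H ->]]; exists (map (fun p => (p.1, w ++ p.2)) l); split.
  by move=> p Hp; case: (lIn_map Hp) => q [Hq ->] /=; rewrite all_cat Hw H.
by rewrite big_map mulr_sumr; apply: eq_bigr => p _ /=; rewrite word_cat scalerAr.
Qed.

Lemma inU_mul (K : fieldType) (A : algType K) r (phi : nat -> 'M[K]_(r.+1) -> A) u v :
  in_U_nminus phi u -> in_U_nminus phi v -> in_U_nminus phi (u * v).
Proof.
move=> [l [H ->]] Hv; elim: l H => [|p l IH] H; first by rewrite big_nil mul0r; apply: inU_0.
rewrite big_cons mulrDl -scalerAl; apply: inU_add.
  by apply: inU_scale; apply: inU_wordmul => //; apply: H; left.
by apply: IH => q Hq; apply: H; right.
Qed.

Lemma inU_ind (K : fieldType) (A : algType K) r (phi : nat -> 'M[K]_(r.+1) -> A) (P : A -> Prop) u :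
  P 0 -> (forall x y, P x -> P y -> P (x + y)) ->
  (forall c w, all (nminus_letter r) w -> P (c *: nminus_word phi w)) ->
  in_U_nminus phi u -> P u.
Proof.
move=> P0 Padd Pw [l [H ->]]; elim: l H => [|p l IH] H; first by rewrite big_nil.
rewrite big_cons; apply: Padd; first by apply: Pw; apply: H; left.
by apply: IH => q Hq; apply: H; right.
Qed.

Definition Fpos r (S : 'I_r -> seq nat) := forall k, all (fun x => (0 < x)%N) (S k).

Definition Good (K : fieldType) (A : algType K) r (phi : nat -> 'M[K]_(r.+1) -> A)
  (D : 'I_r -> nat) (V : A) : Prop :=
  exists l : seq (A * ('I_r -> seq nat)),
   (forall p, lIn p l -> [/\ in_U_nminus phi p.1, Fpos p.2 & btri (abs_s p.2) D]) /\
   V = \sum_(p <- l) p.1 * xplus_r phi p.2.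

Lemma Good_0 (K : fieldType) (A : algType K) r (phi : nat -> 'M[K]_(r.+1) -> A) D :
  Good phi D 0.
Proof. by exists [::]; split => //; rewrite big_nil. Qed.

Lemma Good_add (K : fieldType) (A : algType K) r (phi : nat -> 'M[K]_(r.+1) -> A) D u v :
  Good phi D u -> Good phi D v -> Good phi D (u + v).
Proof.
move=> [l1 [H1 ->]] [l2 [H2 ->]]; exists (l1 ++ l2); split; last by rewrite big_cat.
by move=> p Hp; case: (lIn_cat Hp) => Hq; [exact: H1|exact: H2].
Qed.

Lemma Good_single (K : fieldType) (A : algType K) r (phi : nat -> 'M[K]_(r.+1) -> A) D g S :
  in_U_nminus phi g -> Fpos S -> btri (abs_s S) D -> Good phi D (g * xplus_r phi S).
Proof.
move=> H1 H2 H3; exists [:: (g, S)]; split; first by move=> p /= [<-|//].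
by rewrite big_seq1.
Qed.

Lemma Good_bind (K : fieldType) (A : algType K) r (phi : nat -> 'M[K]_(r.+1) -> A) D D' V
  (F : A -> A) :
  Good phi D V -> (forall x y, F (x + y) = F x + F y) -> F 0 = 0 ->
  (forall g S, in_U_nminus phi g -> Fpos S -> btri (abs_s S) D ->
     Good phi D' (F (g * xplus_r phi S))) ->
  Good phi D' (F V).
Proof.
move=> [l [H ->]] Fadd F0 HF; elim: l H => [|p l IH] H.
  by rewrite big_nil F0; apply: Good_0.
rewrite big_cons Fadd; apply: Good_add.
  by case: (H p (or_introl erefl)) => *; apply: HF.
by apply: IH => q Hq; apply: H; right.
Qed.

Lemma Good_scale (K : fieldType) (A : algType K) r (phi : nat -> 'M[K]_(r.+1) -> A) D c V :
  Good phi D V -> Good phi D (c *: V).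
Proof.
move=> HV; apply: (Good_bind (F := fun v => c *: v) HV).
- by move=> x y; rewrite scalerDr.
- by rewrite scaler0.
- by move=> g S *; rewrite scalerAl; apply: Good_single => //; apply: inU_scale.
Qed.

Lemma Good_opp (K : fieldType) (A : algType K) r (phi : nat -> 'M[K]_(r.+1) -> A) D V :
  Good phi D V -> Good phi D (- V).
Proof. by move=> HV; rewrite -scaleN1r; apply: Good_scale. Qed.

Lemma Good_lmul (K : fieldType) (A : algType K) r (phi : nat -> 'M[K]_(r.+1) -> A) D u V :
  in_U_nminus phi u -> Good phi D V -> Good phi D (u * V).
Proof.
move=> Hu HV; apply: (Good_bind (F := fun v => u * v) HV).
- by move=> x y; rewrite mulrDr.
- by rewrite mulr0.
- by move=> g S *; rewrite mulrA; apply: Good_single => //; apply: inU_mul.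
Qed.

Lemma Good_mono (K : fieldType) (A : algType K) r (phi : nat -> 'M[K]_(r.+1) -> A) D D' V :
  btri D D' -> Good phi D V -> Good phi D' V.
Proof.
move=> HD [l [H ->]]; exists l; split => // p Hp; case: (H p Hp) => H1 H2 H3; split => //.
exact: btri_trans H3 HD.
Qed.

Lemma comm_step (K : fieldType) (A : algType K) r (phi : nat -> 'M[K]_(r.+1) -> A) a (k0 : nat) m :
  is_loop_sl_hom phi -> (k0 < r)%N -> nminus_letter r m ->
  phi a (xplus K r k0.+1 r) * phi m.2 (xminus K r m.1.1 m.1.2)
  - phi m.2 (xminus K r m.1.1 m.1.2) * phi a (xplus K r k0.+1 r) =
  phi (a + m.2)%N (if m.1.1 == k0.+1 then - xplus K r m.1.2.+1 r else 0).
Proof.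
move=> Hphi Hk Hm.
by rewrite (Hphi.2 _ _ _ _ (xplus_tr K Hk) (xminus_tr K Hm)) xplus_xminus_mx.
Qed.

Lemma single_word (K : fieldType) (A : algType K) r (phi : nat -> 'M[K]_(r.+1) -> A) w :
  is_loop_sl_hom phi -> all (nminus_letter r) w ->
  forall (k0 : 'I_r) a, (0 < a)%N ->
  Good phi (abs_s (esing k0 a))
    (phi a (xplus K r k0.+1 r) * nminus_word phi w - nminus_word phi w * phi a (xplus K r k0.+1 r)).
Proof.
move=> Hphi; elim: w => [|m w IH] Hw k0 a Ha.
  by rewrite /nminus_word big_nil mulr1 mul1r subrr; apply: Good_0.
move: Hw => /= /andP [Hm Hw].
set x := phi a _. set W := nminus_word phi w. set y := phi m.2 (xminus K r m.1.1 m.1.2).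
have -> : nminus_word phi (m :: w) = y * W by rewrite /nminus_word big_cons.
have -> : x * (y * W) - y * W * x = (x * y - y * x) * W + y * (x * W - W * x).
  by rewrite mulrBl mulrBr !mulrA addrA subrK.
have Hy : in_U_nminus phi y.
  by have := inU_word phi (w := [:: m]); rewrite /nminus_word big_seq1; apply; rewrite /= Hm.
apply: Good_add; last by apply: Good_lmul => //; apply: IH.
rewrite /x /y comm_step //.
case: eqP => Hi; last by rewrite phi0 // mul0r; apply: Good_0.
have Hj : (m.1.2 < r)%N by move: Hm; rewrite /nminus_letter; lia.
pose j' : 'I_r := Ordinal Hj.
have Hkj : (k0 < j')%N by move: Hm; rewrite /nminus_letter /= Hi; lia.
rewrite phiN //.
have -> : phi (a + m.2)%N (xplus K r m.1.2.+1 r) = xplus_r phi (esing j' (a + m.2)%N)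
  by rewrite xplus_r_e.
set z := xplus_r phi _.
have -> : - z * W = (- W) * z + - (z * W - W * z) by rewrite !mulNr opprB addKr.
have HpE : Fpos (esing j' (a + m.2)%N).
  by move=> k; rewrite /esing; case: (k == j') => //=; rewrite andbT; lia.
apply: Good_add.
  apply: Good_single => //; last by apply: btri_e => //; lia.
  by rewrite -scaleN1r; apply: inU_scale; apply: inU_word.
apply: Good_opp; apply: (@Good_mono _ _ _ _ (abs_s (esing j' (a + m.2)%N))).
  by apply: btri_e => //; lia.
by rewrite /z xplus_r_e; apply: IH => //; lia.
Qed.

Definition nice (K : fieldType) (A : algType K) r (phi : nat -> 'M[K]_(r.+1) -> A)
  (S : 'I_r -> seq nat) : Prop :=
  Fpos S /\ forall u, in_U_nminus phi u ->
    Good phi (abs_s S) (xplus_r phi S * u - u * xplus_r phi S).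

Lemma nice_single (K : fieldType) (A : algType K) r (phi : nat -> 'M[K]_(r.+1) -> A) k0 a :
  is_loop_sl_hom phi -> (0 < a)%N -> nice phi (esing k0 a).
Proof.
move=> Hphi Ha; split.
  by move=> k; rewrite /esing; case: (k == k0) => //=; rewrite Ha.
move=> u Hu; rewrite xplus_r_e; set x := phi a _.
apply: (inU_ind (P := fun u => Good phi _ (x * u - u * x))) Hu.
- by rewrite mulr0 mul0r subrr; apply: Good_0.
- move=> u1 u2 H1 H2.
  have -> : x * (u1 + u2) - (u1 + u2) * x = (x * u1 - u1 * x) + (x * u2 - u2 * x)
    by rewrite mulrDr mulrDl opprD addrACA.
  exact: Good_add.
- move=> c w Hw.
  have -> : x * (c *: nminus_word phi w) - (c *: nminus_word phi w) * x
         = c *: (x * nminus_word phi w - nminus_word phi w * x)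
    by rewrite -scalerAr -scalerAl scalerBr.
  by apply: Good_scale; apply: single_word.
Qed.

Lemma nice_nil (K : fieldType) (A : algType K) r (phi : nat -> 'M[K]_(r.+1) -> A) :
  nice phi (fun _ => [::]).
Proof.
split => // u _; rewrite xplus_r_nil mul1r mulr1 subrr; apply: Good_0.
Qed.

Lemma nice_cat (K : fieldType) (A : algType K) r (phi : nat -> 'M[K]_(r.+1) -> A) S T :
  is_loop_sl_hom phi -> nice phi S -> nice phi T -> nice phi (fun k => S k ++ T k).
Proof.
move=> Hphi [PS HS] [PT HT]; split; first by move=> k; rewrite all_cat PS PT.
move=> u Hu; rewrite xplus_r_cat // abs_cat.
set X1 := xplus_r phi S; set X2 := xplus_r phi T.
have -> : X1 * X2 * u - u * (X1 * X2) = X1 * (X2 * u - u * X2) + (X1 * u - u * X1) * X2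
  by rewrite mulrBr mulrBl !mulrA addrA subrK.
apply: Good_add.
  apply: (Good_bind (F := fun v => X1 * v) (HT u Hu)).
  - by move=> *; rewrite mulrDr.
  - by rewrite mulr0.
  move=> g S' Hg PS' HS'.
  have -> : X1 * (g * xplus_r phi S') = g * xplus_r phi (fun k => S k ++ S' k)
        + (X1 * g - g * X1) * xplus_r phi S'
    by rewrite xplus_r_cat // mulrBl !mulrA addrC subrK.
  apply: Good_add.
    apply: Good_single => //; first by move=> k; rewrite all_cat PS PS'.
    by rewrite abs_cat; apply: btri_addl.
  apply: (Good_bind (F := fun v => v * xplus_r phi S') (HS g Hg)).
  - by move=> *; rewrite mulrDl.
  - by rewrite mul0r.
  move=> h S'' Hh PS'' HS''; rewrite -mulrA -xplus_r_cat //.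
  apply: Good_single => //; first by move=> k; rewrite all_cat PS'' PS'.
  by rewrite abs_cat; apply: btri_add2.
apply: (Good_bind (F := fun v => v * X2) (HS u Hu)).
- by move=> *; rewrite mulrDl.
- by rewrite mul0r.
move=> g S' Hg PS' HS'; rewrite -mulrA -xplus_r_cat //.
apply: Good_single => //; first by move=> k; rewrite all_cat PS' PT.
by rewrite abs_cat; apply: btri_addr.
Qed.

Lemma nice_all (K : fieldType) (A : algType K) r (phi : nat -> 'M[K]_(r.+1) -> A) :
  is_loop_sl_hom phi ->
  forall n (S : 'I_r -> seq nat), (\sum_k size (S k) <= n)%N -> Fpos S -> nice phi S.
Proof.
move=> Hphi; elim=> [|n IH] S Hs Hp;
  case: (boolP [exists k, S k != [::]]) => [/existsP [k0 Hk0]|/existsPn Hall].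
2,4: have -> : S = (fun _ => [::]);
     [ apply: functional_extensionality => k; apply/eqP; by move: (Hall k); rewrite negbK
     | exact: nice_nil].
all: case E: (S k0) Hk0 => [|a s] // _.
all: pose S' := fun k => if k == k0 then s else S k.
all: have HS : S = (fun k => esing k0 a k ++ S' k) by
       apply: functional_extensionality => k; rewrite /S' /esing; case: eqP => [->|] //=; rewrite E.
all: have Hm : (\sum_k size (S k) = (\sum_k size (S' k)).+1)%N by
       rewrite (bigD1 k0) //= [in RHS](bigD1 k0) //= E /S' eqxx /= addSn;
       congr (_.+1); congr (_ + _); apply: eq_bigr => k /negbTE Hk; rewrite Hk.
  by rewrite Hm in Hs.
have Ha : (0 < a)%N by move: (Hp k0); rewrite E => /andP [].
rewrite HS; apply: nice_cat => //; first exact: nice_single.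
apply: IH; first by rewrite Hm in Hs.
move=> k; rewrite /S'; case: eqP => _ //; by move: (Hp k0); rewrite E => /andP [].
Qed.

Theorem lemma3p4 (K : numClosedFieldType) (A : algType K) (r : nat)
  (phi : nat -> 'M[K]_(r.+1) -> A) (eta : 'I_r -> nat) (g : A)
  (S : 'I_r -> seq nat) :
  (2 <= r)%N ->
  is_loop_sl_hom phi ->
  (exists k, eta k <> 0%N) ->
  in_U_nminus phi g -> has_weight_neg phi eta g ->
  in_Fplus_r S ->
  exists l : seq (A * ('I_r -> seq nat)),
    (forall p, lIn p l ->
       [/\ in_U_nminus phi p.1, in_Fplus_r p.2 & btri (abs_s p.2) (abs_s S)]) /\
    xplus_r phi S * g - g * xplus_r phi S = \sum_(p <- l) p.1 * xplus_r phi p.2.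
Proof.
move=> _ Hphi _ Hg _ HS.
have Hpos : Fpos S by move=> k; case/andP: (HS k).
have [_ Hn] := nice_all Hphi (leqnn _) Hpos.
have [l [Hl E]] := Hn g Hg.
exists (map (fun p => (p.1, fun k => sort leq (p.2 k))) l); split.
  move=> p Hp; case: (lIn_map Hp) => q [Hq ->] /=; case: (Hl q Hq) => H1 H2 H3; split => //.
    move=> k; rewrite /in_Fplus (sort_sorted leq_total) /=.
    have Hpe : perm_eq (sort leq (q.2 k)) (q.2 k) by rewrite perm_sort.
    by rewrite (perm_all _ Hpe) H2.
  by rewrite abs_sort.
rewrite E big_map; apply: eq_bigr => p _ /=; by rewrite xplus_r_sort.
Qed.
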